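(* Let $k$ be a positive integer, $V=[k]\times[k]$, terminals $t_i=(i,i)$, and $\gamma=2\lfloor 2k-\sqrt{3k^2-2k}\rfloor$. Let $f$ be the function on $2^V$ defined below with this $\gamma$. Call a partition $(A_1,\ldots,A_k)$ of $V$ with $t_\ell\in A_\ell$ for all $\ell$ an assignment, with cost $\sum_{\ell=1}^k f(A_\ell)$, and call it symmetric if $(i,j)$ and $(j,i)$ lie in the same part for all $i,j$. Then the ratio of the minimum cost of a symmetric assignment to the minimum cost of an assignment is at least $\frac{8\sqrt3-12}{2\sqrt3-2}-O(\frac1k)$.
   Context: Rows $R_i=\{(i,j):j\in[k]\}$, columns $C_i=\{(j,i):j\in[k]\}$. Define $\phi:\mathbb{R}\to\mathbb{R}$ by $\phi(t)=t$ if $t\le k-\gamma/2$ and $\phi(t)=2k-t-\gamma$ otherwise. For $i\in[k]$ and $S\subseteq V$ let $g_i(S)=\phi(|S|)$ if $t_i\notin S$ and $g_i(S)=\phi(k-|S|)$ if $t_i\in S$. Then $f(S)=\sum_{i=1}^k g_i(S\cap R_i)+\sum_{i=1}^k g_i(S\cap C_i)$. *)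

(* Defs.v *)
From HB Require Import structures.
From mathcomp Require Import all_boot all_order all_algebra.
From mathcomp Require Import reals.
Set Implicit Arguments. Unset Strict Implicit. Unset Printing Implicit Defensive.
Import Order.TTheory GRing.Theory Num.Theory.
Local Open Scope ring_scope.

(* [k] is represented by 'I_k = {0,...,k-1}; V = [k] x [k]; t_i = (i,i). *)
Definition V (k : nat) := ('I_k * 'I_k)%type.

Definition term (k : nat) (i : 'I_k) : V k := (i, i).

Definition row (k : nat) (i : 'I_k) : {set V k} := [set v : V k | v.1 == i].
Definition col (k : nat) (i : 'I_k) : {set V k} := [set v : V k | v.2 == i].

Definition gam (R : realType) (k : nat) : R :=
  2 * (Num.floor (2 * (k%:R : R) - Num.sqrt (3 * (k%:R : R) ^+ 2 - 2 * (k%:R : R))))%:~R.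

Definition phi (R : realType) (k : nat) (t : R) : R :=
  if t <= k%:R - gam R k / 2 then t else 2 * k%:R - t - gam R k.

Definition g (R : realType) (k : nat) (i : 'I_k) (S : {set V k}) : R :=
  if term i \notin S then @phi R k (#|S|%:R) else @phi R k ((k - #|S|)%:R).

Definition f (R : realType) (k : nat) (S : {set V k}) : R :=
  \sum_(i < k) @g R k i (S :&: row i) + \sum_(i < k) @g R k i (S :&: col i).

Definition assignment (k : nat) (A : 'I_k -> {set V k}) : Prop :=
  (forall l : 'I_k, term l \in A l) /\
  (forall v : V k, exists! l : 'I_k, v \in A l).

Definition symmetric_assignment (k : nat) (A : 'I_k -> {set V k}) : Prop :=
  assignment A /\
  (forall (i j : 'I_k) (l : 'I_k), ((i, j) \in A l) = ((j, i) \in A l)).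

Definition cost (R : realType) (k : nat) (A : 'I_k -> {set V k}) : R :=
  \sum_(l < k) @f R k (A l).

Definition is_min_cost (R : realType) (k : nat)
    (P : ('I_k -> {set V k}) -> Prop) (m : R) : Prop :=
  (exists A, P A /\ @cost R k A = m) /\ (forall A, P A -> m <= @cost R k A).

(* Main.v *)
Require Import Defs.
From HB Require Import structures.
From mathcomp Require Import all_boot all_order all_algebra.
From mathcomp Require Import reals.
From mathcomp Require Import ring lra.
Import Order.TTheory GRing.Theory Num.Theory.
Local Open Scope ring_scope.

Definition ind {R : realType} (b : bool) : R := if b then 1 else 0.

Lemma ind_ge0 (R : realType) b : 0 <= @ind R b.
Proof. by rewrite /ind; case: b. Qed.
Lemma ind_le1 (R : realType) b : @ind R b <= 1.
Proof. by rewrite /ind; case: b. Qed.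

Definition aa (R : realType) k (A : 'I_k -> {set V k}) (i l : 'I_k) : R :=
  \sum_(j < k) ind ((i, j) \in A l).
Definition ab (R : realType) k (A : 'I_k -> {set V k}) (i l : 'I_k) : R :=
  \sum_(j < k) ind ((j, i) \in A l).
Arguments aa R {k} A i l.
Arguments ab R {k} A i l.

Lemma assign_uniq k (A : 'I_k -> {set V k}) v l1 l2 :
  assignment A -> v \in A l1 -> v \in A l2 -> l1 = l2.
Proof.
move=> [_ /(_ v) [l0 [_ hu]]] h1 h2.
by rewrite -(hu _ h1) -(hu _ h2).
Qed.
Arguments assign_uniq {k A v l1 l2}.

Lemma assign_sum (R : realType) k (A : 'I_k -> {set V k}) v :
  assignment A -> \sum_(l < k) @ind R (v \in A l) = 1.
Proof.
move=> hA; have [_ /(_ v) [l0 [h0 hu]]] := hA.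
rewrite (bigD1 l0) //= /ind h0 big1 ?addr0 // => l hl.
case: ifP => // hv; exfalso; move: hl; by rewrite (hu _ hv) eqxx.
Qed.

Lemma sum_aa (R : realType) k (A : 'I_k -> {set V k}) i :
  assignment A -> \sum_(l < k) aa R A i l = k%:R.
Proof.
move=> hA; rewrite /aa exchange_big /=.
rewrite (eq_bigr (fun _ => 1)) => [|j _]; last exact: assign_sum.
by rewrite sumr_const card_ord.
Qed.

Lemma sum_ab (R : realType) k (A : 'I_k -> {set V k}) i :
  assignment A -> \sum_(l < k) ab R A i l = k%:R.
Proof.
move=> hA; rewrite /ab exchange_big /=.
rewrite (eq_bigr (fun _ => 1)) => [|j _]; last exact: assign_sum.
by rewrite sumr_const card_ord.
Qed.

Lemma aa_ge0 (R : realType) k (A : 'I_k -> {set V k}) i l : 0 <= aa R A i l.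
Proof. by apply: sumr_ge0 => j _; apply: ind_ge0. Qed.
Lemma ab_ge0 (R : realType) k (A : 'I_k -> {set V k}) i l : 0 <= ab R A i l.
Proof. by apply: sumr_ge0 => j _; apply: ind_ge0. Qed.

Lemma aa_le (R : realType) k (A : 'I_k -> {set V k}) i l : aa R A i l <= k%:R.
Proof.
rewrite /aa -[k in k%:R]card_ord -sumr_const.
by apply: ler_sum => j _; apply: ind_le1.
Qed.
Lemma ab_le (R : realType) k (A : 'I_k -> {set V k}) i l : ab R A i l <= k%:R.
Proof.
rewrite /ab -[k in k%:R]card_ord -sumr_const.
by apply: ler_sum => j _; apply: ind_le1.
Qed.

Lemma card_ind (R : realType) (T : finType) (S : {set T}) :
  (#|S|%:R : R) = \sum_(v : T) ind (v \in S).
Proof.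
rewrite -sum1_card natr_sum big_mkcond /=.
by apply: eq_bigr => v _; rewrite /ind; case: (v \in S).
Qed.

Lemma card_row (R : realType) k (A : 'I_k -> {set V k}) i l :
  (#|A l :&: Defs.row i|%:R : R) = aa R A i l.
Proof.
rewrite card_ind.
rewrite (eq_bigr (fun v => (fun x y => @ind R (((x, y) \in A l) && (x == i))) v.1 v.2)); last first.
  by move=> [x y] _; rewrite /Defs.row in_setI inE.
rewrite -(pair_bigA _ (fun x y => @ind R (((x, y) \in A l) && (x == i)))) /=.
rewrite (bigD1 i) //= [X in _ + X]big1 ?addr0.
  by apply: eq_bigr => j _; rewrite eqxx andbT.
move=> x hx; apply: big1 => y _; by rewrite (negbTE hx) andbF.
Qed.

Lemma card_col (R : realType) k (A : 'I_k -> {set V k}) i l :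
  (#|A l :&: Defs.col i|%:R : R) = ab R A i l.
Proof.
rewrite card_ind.
rewrite (eq_bigr (fun v => (fun x y => @ind R (((x, y) \in A l) && (y == i))) v.1 v.2)); last first.
  by move=> [x y] _; rewrite /Defs.col in_setI inE.
rewrite -(pair_bigA _ (fun x y => @ind R (((x, y) \in A l) && (y == i)))) /=.
apply: eq_bigr => x _.
rewrite (bigD1 i) //= [X in _ + X]big1 ?addr0; first by rewrite eqxx andbT.
move=> y hy; by rewrite (negbTE hy) andbF.
Qed.

Definition pp (R : realType) k : R := k%:R - gam R k / 2.
Definition phiP (R : realType) (p t : R) := if t <= p then t else 2 * p - t.
Arguments phiP {R}.

Lemma phi_eq (R : realType) k (t : R) : phi k t = phiP (pp R k) t.
Proof. rewrite /phi /phiP /pp; case: ifP => _ //; by field. Qed.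

Lemma term_row k (A : 'I_k -> {set V k}) i l : assignment A ->
  (term i \in A l :&: Defs.row i) = (l == i).
Proof.
move=> hA; rewrite in_setI /Defs.row inE /term eqxx andbT.
apply/idP/eqP => [h|->]; last by case: hA => h _; exact: (h i).
by case: (hA) => h0 _; exact: (@assign_uniq _ A (term i) l i hA h (h0 i)).
Qed.

Lemma term_col k (A : 'I_k -> {set V k}) i l : assignment A ->
  (term i \in A l :&: Defs.col i) = (l == i).
Proof.
move=> hA; rewrite in_setI /Defs.col inE /term eqxx andbT.
apply/idP/eqP => [h|->]; last by case: hA => h _; exact: (h i).
by case: (hA) => h0 _; exact: (@assign_uniq _ A (term i) l i hA h (h0 i)).
Qed.

Lemma natrB_card (R : realType) k n (x : R) : (n%:R : R) = x -> x <= k%:R ->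
  ((k - n)%:R : R) = k%:R - x.
Proof. move=> <- h; rewrite natrB //; by rewrite -(ler_nat R). Qed.

Definition rc (R : realType) k (p : R) (x : 'I_k -> R) (i : 'I_k) : R :=
  phiP p (k%:R - x i) + \sum_(l < k | l != i) phiP p (x l).
Arguments rc {R k}.

Lemma rows_sum (R : realType) k (A : 'I_k -> {set V k}) i : assignment A ->
  \sum_(l < k) g R i (A l :&: Defs.row i) = rc (pp R k) (aa R A i) i.
Proof.
move=> hA; rewrite (bigD1 i) //= /rc; congr (_ + _).
  rewrite /g term_row // eqxx /= phi_eq (@natrB_card R k _ _ (card_row R _ A i i)) //.
  exact: aa_le.
apply: eq_bigr => l hl; rewrite /g term_row // (negbTE hl) /= phi_eq card_row //.
Qed.

Lemma cols_sum (R : realType) k (A : 'I_k -> {set V k}) i : assignment A ->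
  \sum_(l < k) g R i (A l :&: Defs.col i) = rc (pp R k) (ab R A i) i.
Proof.
move=> hA; rewrite (bigD1 i) //= /rc; congr (_ + _).
  rewrite /g term_col // eqxx /= phi_eq (@natrB_card R k _ _ (card_col R _ A i i)) //.
  exact: ab_le.
apply: eq_bigr => l hl; rewrite /g term_col // (negbTE hl) /= phi_eq card_col //.
Qed.

Lemma cost_eq (R : realType) k (A : 'I_k -> {set V k}) : assignment A ->
  cost R A = \sum_(i < k) (rc (pp R k) (aa R A i) i + rc (pp R k) (ab R A i) i).
Proof.
move=> hA; rewrite /cost /f big_split /= exchange_big [X in _ + X]exchange_big -big_split /=.
by apply: eq_bigr => i _; rewrite rows_sum // cols_sum.
Qed.

Lemma two_le (R : realType) k (x : 'I_k -> R) l L : (forall j, 0 <= x j) ->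
  l != L -> x l + x L <= \sum_(j < k) x j.
Proof.
move=> h0 hl; rewrite (bigD1 l) //= (bigD1 L) /=; last by rewrite eq_sym.
have := @sumr_ge0 R _ (index_enum 'I_k) (fun j => (j != l) && (j != L)) x (fun j _ => h0 j).
lra.
Qed.
Arguments two_le {R k x l L}.

Lemma rc_light (R : realType) k (p : R) (x : 'I_k -> R) i :
  (forall l, 0 <= x l) -> \sum_(l < k) x l = k%:R ->
  (forall l, l != i -> x l <= p) ->
  rc p x i = if k%:R - x i <= p then 2 * (k%:R - x i) else 2 * p.
Proof.
move=> h0 hs hle.
have e : \sum_(l < k | l != i) phiP p (x l) = k%:R - x i.
  rewrite (eq_bigr x) => [|l hl]; last by rewrite /phiP (hle l hl).
  move: hs; rewrite (bigD1 i) //=; lra.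
rewrite /rc e /phiP; case: ifP => _; lra.
Qed.

Lemma rc_heavy (R : realType) k (p : R) (x : 'I_k -> R) i L :
  k%:R <= 2 * p -> (forall l, 0 <= x l) -> \sum_(l < k) x l = k%:R ->
  L != i -> p < x L -> rc p x i = 4 * p - 2 * x L.
Proof.
move=> hkp h0 hs hLi hpL.
have hiL : x i + x L <= k%:R by rewrite -hs; apply: two_le => //; rewrite eq_sym.
have e : \sum_(l < k | l != i) phiP p (x l) =
    phiP p (x L) + \sum_(l < k | (l != i) && (l != L)) x l.
  rewrite (bigD1 L) //=; congr (_ + _); apply: eq_bigr => l /andP [hl1 hl2].
  have := two_le h0 hl2; rewrite hs => h; rewrite /phiP ifT //; lra.
have e2 : \sum_(l < k | l != i) x l = x L + \sum_(l < k | (l != i) && (l != L)) x l.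
  by rewrite (bigD1 L).
have e3 : \sum_(l < k) x l = x i + \sum_(l < k | l != i) x l by rewrite (bigD1 i).
have hn1 : (x L <= p) = false by apply/negbTE; rewrite -ltNge.
have hn2 : (k%:R - x i <= p) = false by apply/negbTE; rewrite -ltNge; lra.
rewrite /rc e /phiP hn1 hn2; lra.
Qed.

Definition hvL (R : realType) k (p : R) (x : 'I_k -> R) (i : 'I_k) :=
  [pick l | (l != i) && (p < x l)].
Arguments hvL {R k}.

Definition tau (R : realType) k (p : R) (x : 'I_k -> R) (i : 'I_k) : R :=
  match hvL p x i with
  | Some L => 4 * p - 2 * x L
  | None => if k%:R - x i <= p then 2 * (k%:R - x i) else 2 * p
  end.
Arguments tau {R k}.

Lemma rc_tau (R : realType) k (p : R) (x : 'I_k -> R) i :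
  k%:R <= 2 * p -> (forall l, 0 <= x l) -> \sum_(l < k) x l = k%:R ->
  rc p x i = tau p x i.
Proof.
move=> hkp h0 hs; rewrite /tau /hvL; case: pickP => [L /andP [h1 h2]|hn].
  exact: rc_heavy.
apply: rc_light => // l hl; have := hn l; rewrite hl /= => /negbT.
by rewrite -leNgt.
Qed.

Lemma rc_ge (R : realType) k (p : R) (x : 'I_k -> R) i :
  k%:R <= 2 * p -> 2 * k%:R + 2 <= 4 * p -> 1 <= p -> p <= k%:R ->
  (forall l, 0 <= x l) -> \sum_(l < k) x l = k%:R -> (forall l, x l <= k%:R) ->
  (if x i <= k%:R - 1 then 2 else 0) <= rc p x i.
Proof.
move=> hkp h2k h1 hpk h0 hs hle; rewrite rc_tau // /tau.
case: (hvL p x i) => [L|].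
  have := hle L; case: ifP => ?; lra.
have := hle i; case: ifP => ?; case: ifP => ?; lra.
Qed.
Arguments rc_ge {R k p x} i.

Lemma sum_delta (R : realType) k (F : 'I_k -> R) i :
  \sum_(j < k) F j * ind (i == j) = F i.
Proof.
rewrite (bigD1 i) //= /ind eqxx mulr1 big1 ?addr0 // => j hj.
by rewrite eq_sym (negbTE hj) mulr0.
Qed.

Lemma ind_sq (R : realType) b : @ind R b * ind b = ind b.
Proof. by rewrite /ind; case: b; rewrite ?mulr1 ?mulr0. Qed.

Lemma sum_ind1 (R : realType) k : \sum_(j < k) (1 : R) = k%:R.
Proof. by rewrite sumr_const card_ord. Qed.

Lemma b_eq (R : realType) k (A : 'I_k -> {set V k}) i l :
  k%:R - aa R A i l = \sum_(j < k) ind ((i, j) \notin A l).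
Proof.
rewrite /aa -sum_ind1 -sumrB; apply: eq_bigr => j _.
by rewrite /ind; case: ((i,j) \in A l) => /=; rewrite ?subrr ?subr0.
Qed.

Lemma symA k (A : 'I_k -> {set V k}) i j l : symmetric_assignment A ->
  ((i, j) \in A l) = ((j, i) \in A l).
Proof. by case=> _ h; apply: h. Qed.
Arguments symA {k A i j l}.

Lemma pairA (R : realType) k (A : 'I_k -> {set V k}) i j :
  symmetric_assignment A ->
  1 - ind (i == j) <= @ind R ((i, j) \notin A i) + ind ((j, i) \notin A j).
Proof.
move=> hS; have hA := hS.1.
have e : ((j, i) \in A j) = ((i, j) \in A j) := symA hS.
rewrite e /ind.
case: (eqVneq i j) => [<-|hij]; first by case: ifP => ?; lra.
case: ifP => h1; case: ifP => h2; try lra.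
move/negbFE: h1 => h1; move/negbFE: h2 => h2.
by rewrite (assign_uniq hA h1 h2) eqxx in hij.
Qed.

Definition Sm (R : realType) k (A : 'I_k -> {set V k}) (p : R) i : R :=
  ind ((hvL p (aa R A i) i == None) && (k%:R - aa R A i i <= p)).
Arguments Sm {R k}.
Definition sS (R : realType) k (A : 'I_k -> {set V k}) (p : R) : R :=
  \sum_(i < k) Sm A p i.
Arguments sS {R k}.
Definition hvT (R : realType) k (A : 'I_k -> {set V k}) (p : R) (s : R) i : R :=
  match hvL p (aa R A i) i with
  | Some L => 2 * (aa R A i L - k%:R + s - 1)
  | None => 0 end.
Arguments hvT {R k}.

Lemma count_main (R : realType) k (A : 'I_k -> {set V k}) (p : R) :
  symmetric_assignment A ->
  sS A p * (sS A p - 1) + \sum_(i < k) hvT A p (sS A p) i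
  <= \sum_(i < k) Sm A p i * (2 * (k%:R - aa R A i i)).
Proof.
move=> hS; have hA := hS.1.
rewrite /hvT.
set x := aa R A; set S := Sm A p; set s := sS A p.
pose H := fun j => @ind R (hvL p (x j) j != None).
pose X := fun i j => @ind R ((i, j) \notin A i).
have S0 : forall i, 0 <= S i by move=> i; apply: ind_ge0.
have S1 : forall i, S i <= 1 by move=> i; apply: ind_le1.
have H0 : forall i, 0 <= H i by move=> i; apply: ind_ge0.
have X0 : forall i j, 0 <= X i j by move=> i j; apply: ind_ge0.
have hSH : forall j, S j + H j <= 1.
  move=> j; rewrite /S /Sm /H /x /ind; case: (hvL p (aa R A j) j) => [L|] /=; [lra | case: ifP => ?; lra].
have st1 : forall i, \sum_(j < k) (S j + H j) * X i j <= k%:R - x i i.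
  move=> i; rewrite /x b_eq; apply: ler_sum => j _.
  have := hSH j; have := X0 i j; rewrite /X; move: (S j + H j) (ind _) => a c ha hc; nra.
pose T1 := \sum_(i < k) \sum_(j < k) S i * S j * X i j.
pose T2 := \sum_(i < k) \sum_(j < k) S i * H j * X i j.
have E : \sum_(i < k) S i * (2 * \sum_(j < k) (S j + H j) * X i j) = 2 * T1 + 2 * T2.
  rewrite /T1 /T2 !mulr_sumr -big_split; apply: eq_bigr => i _ /=.
  rewrite !mulr_sumr -big_split; apply: eq_bigr => j _ /=; ring.
have L1 : 2 * T1 + 2 * T2 <= \sum_(i < k) S i * (2 * (k%:R - x i i)).
  rewrite -E; apply: ler_sum => i _; apply: ler_wpM2l => //.
  by rewrite ler_pM2l // st1.
have T1s : T1 = \sum_(i < k) \sum_(j < k) S i * S j * X j i.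
  rewrite /T1 exchange_big /=; apply: eq_bigr => i _; apply: eq_bigr => j _; ring.
have A1 : s * (s - 1) <= 2 * T1.
  have -> : 2 * T1 = \sum_(i < k) \sum_(j < k) S i * S j * (X i j + X j i).
    rewrite mulr2n mulrDl mul1r {2}T1s /T1 -big_split; apply: eq_bigr => i _ /=.
    rewrite -big_split; apply: eq_bigr => j _ /=; ring.
  have -> : s * (s - 1) = \sum_(i < k) \sum_(j < k) S i * S j * (1 - ind (i == j)).
    have e1 : forall i, \sum_(j < k) S i * S j * (1 - ind (i == j)) = S i * s - S i.
      move=> i; rewrite (eq_bigr (fun j => S i * S j - (S i * S j) * ind (i == j))); last first.
        by move=> j _; ring.
      rewrite sumrB sum_delta ind_sq /s mulr_sumr //.
    rewrite (eq_bigr _ (fun i _ => e1 i)) sumrB -mulr_suml (_ : \sum_(i < k) S i = s) //; ring.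
  apply: ler_sum => i _; apply: ler_sum => j _; apply: ler_wpM2l.
    by apply: mulr_ge0.
  exact: pairA.
have A2 : \sum_(i < k) (match hvL p (x i) i with
                         | Some L => 2 * (x i L - k%:R + s - 1)
                         | None => 0 end) <= 2 * T2.
  rewrite /T2 exchange_big /= mulr_sumr; apply: ler_sum => j _.
  rewrite /H /ind; case e : (hvL p (x j) j) => [L|] /=; last first.
    rewrite big1 ?mulr0 // => i _; by rewrite mulr0 mul0r.
  have pt : forall i, @ind R ((j, i) \in A L) - (1 - S i) - ind (i == L) <= S i * 1 * X i j.
    move=> i; rewrite mulr1 /X /S /Sm /ind; case: ((hvL p (aa R A i) i == None) && _); last first.
      by case: ifP => ?; case: ifP => ?; case: ifP => ?; lra.
    have e2 : ((i, j) \in A i) = ((j, i) \in A i) := symA hS.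
    rewrite e2; case: (eqVneq i L) => [->|hiL]; first by case: ((j, L) \in A L) => /=; lra.
    case: ifP => h1; case: ifP => h2 //=; try lra.
    move/negbFE: h2 => h2; by rewrite (assign_uniq hA h2 h1) eqxx in hiL.
  have : \sum_(i < k) (@ind R ((j, i) \in A L) - (1 - S i) - ind (i == L)) <= \sum_(i < k) S i * 1 * X i j.
    by apply: ler_sum => i _; apply: pt.
  rewrite !sumrB sum_ind1 -/s.
  have -> : \sum_(i < k) @ind R (i == L) = 1.
    rewrite (eq_bigr (fun i => 1 * ind (L == i))) ?sum_delta // => i _; by rewrite mul1r eq_sym.
  have -> : \sum_(i < k) @ind R ((j, i) \in A L) = x j L by [].
  rewrite (_ : \sum_i S i = s) //; lra.
lra.
Qed.

Lemma final_ineq (R : realType) (k p s h : R) :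
  0 <= s -> 0 <= h -> s + h <= k -> 0 <= p -> p <= k ->
  - 2 * k <= p ^+ 2 - 2 * k * (k - p) ->
  2 * p * k - p ^+ 2 - 4 * k <= s * (s - 1) + h * (4 * p - 2 * k + 2 * s - 2) + 2 * p * (k - s - h).
Proof.
move=> hs hh hsh hp hpk hq.
case: (lerP (k - p) s) => c.
  have : 0 <= h * (s - (k - p)) by apply: mulr_ge0; lra.
  have : 0 <= (s - p) ^+ 2 by apply: sqr_ge0.
  lra.
have : 0 <= (k - s - h) * ((k - p) - s) by apply: mulr_ge0; lra.
have : 0 <= s * (4 * (k - p) - s) by apply: mulr_ge0; lra.
nra.
Qed.

Lemma ab_aa (R : realType) k (A : 'I_k -> {set V k}) i l :
  symmetric_assignment A -> ab R A i l = aa R A i l.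
Proof. by move=> hS; apply: eq_bigr => j _; rewrite (symA hS). Qed.

Lemma sym_rc (R : realType) k (A : 'I_k -> {set V k}) (p : R) :
  symmetric_assignment A ->
  k%:R <= 2 * p -> p <= k%:R ->
  - 2 * k%:R <= p ^+ 2 - 2 * k%:R * (k%:R - p) ->
  2 * p * k%:R - p ^+ 2 - 4 * k%:R <= \sum_(i < k) rc p (aa R A i) i.
Proof.
move=> hS hkp hpk hq; have hA := hS.1.
have hp0 : 0 <= p by have : (0:R) <= k%:R by []; lra.
rewrite (eq_bigr (fun i => tau p (aa R A i) i)); last first.
  move=> i _; rewrite rc_tau //; [ | exact: sum_aa]; move=> l; exact: aa_ge0.
pose Hi := fun i => @ind R (hvL p (aa R A i) i != None).
pose h := \sum_(i < k) Hi i.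
have et2 : forall i, tau p (aa R A i) i - Sm A p i * (2 * (k%:R - aa R A i i)) + hvT A p (sS A p) i
    = Hi i * (4 * p - 2 * k%:R + 2 * sS A p - 2) + (1 - Sm A p i - Hi i) * (2 * p).
  move=> i; rewrite /tau /hvT /Sm /Hi /ind.
  case: (hvL p (aa R A i) i) => [L|] /=; first lra.
  case: ifP => _; lra.
have e3 : \sum_(i < k) tau p (aa R A i) i =
    \sum_(i < k) Sm A p i * (2 * (k%:R - aa R A i i)) - \sum_(i < k) hvT A p (sS A p) i
    + (h * (4 * p - 2 * k%:R + 2 * sS A p - 2) + (k%:R - sS A p - h) * (2 * p)).
  have -> : h * (4 * p - 2 * k%:R + 2 * sS A p - 2) + (k%:R - sS A p - h) * (2 * p) =
      \sum_(i < k) (Hi i * (4 * p - 2 * k%:R + 2 * sS A p - 2) + (1 - Sm A p i - Hi i) * (2 * p)).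
    rewrite big_split /= -!mulr_suml !sumrB sum_ind1 //.
  rewrite -sumrB -!big_split; apply: eq_bigr => i _ /=; rewrite -et2; ring.
have hcm := @count_main R k A p hS.
have hs0 : 0 <= sS A p by apply: sumr_ge0 => i _; apply: ind_ge0.
have hh0 : 0 <= h by apply: sumr_ge0 => i _; apply: ind_ge0.
have hsh : sS A p + h <= k%:R.
  rewrite /sS /h -big_split -sum_ind1; apply: ler_sum => i _.
  rewrite /Sm /Hi /ind; case: (hvL p (aa R A i) i) => [L|] /=; first lra.
  case: ifP => _; lra.
have := @final_ineq R _ _ _ _ hs0 hh0 hsh hp0 hpk hq.
rewrite e3; lra.
Qed.

Lemma b_eq' (R : realType) k (A : 'I_k -> {set V k}) i l :
  k%:R - ab R A i l = \sum_(j < k) ind ((j, i) \notin A l).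
Proof.
rewrite /ab -sum_ind1 -sumrB; apply: eq_bigr => j _.
by rewrite /ind; case: ((j,i) \in A l) => /=; rewrite ?subrr ?subr0.
Qed.

Lemma sym_cost (R : realType) k (A : 'I_k -> {set V k}) :
  symmetric_assignment A ->
  cost R A = 2 * \sum_(i < k) rc (pp R k) (aa R A i) i.
Proof.
move=> hS; rewrite cost_eq; last exact: hS.1.
rewrite mulr_sumr; apply: eq_bigr => i _.
rewrite (_ : rc (pp R k) (ab R A i) i = rc (pp R k) (aa R A i) i); first ring.
by rewrite /rc; congr (_ + _); [rewrite ab_aa | apply: eq_bigr => l _; rewrite ab_aa].
Qed.

Lemma single_le (R : realType) k (F : 'I_k -> R) j :
  (forall i, 0 <= F i) -> F j <= \sum_(i < k) F i.
Proof.
move=> h0; rewrite (bigD1 j) //=.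
have := @sumr_ge0 R _ (index_enum 'I_k) (fun i => i != j) F (fun i _ => h0 i); lra.
Qed.
Arguments single_le {R k F} j.

Lemma cost_pos (R : realType) k (A : 'I_k -> {set V k}) : (2 <= k)%N ->
  assignment A ->
  let p := pp R k in
  k%:R <= 2 * p -> 2 * k%:R + 2 <= 4 * p -> 1 <= p -> p <= k%:R ->
  2 <= cost R A.
Proof.
move=> hk hA p h1 h2 h3 h4; rewrite cost_eq //.
have r0 : forall i, 0 <= rc p (aa R A i) i.
  move=> i; apply: le_trans (rc_ge i h1 h2 h3 h4 _ _ _) => //.
  - by case: ifP.
  - by move=> l; apply: aa_ge0.
  - exact: sum_aa.
  - by move=> l; apply: aa_le.
have c0 : forall i, 0 <= rc p (ab R A i) i.
  move=> i; apply: le_trans (rc_ge i h1 h2 h3 h4 _ _ _) => //.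
  - by case: ifP.
  - by move=> l; apply: ab_ge0.
  - exact: sum_ab.
  - by move=> l; apply: ab_le.
have k0 : (0 < k)%N by apply: leq_trans hk.
pose i0 : 'I_k := Ordinal k0.
pose j0 : 'I_k := Ordinal hk.
have hij : i0 != j0 by [].
rewrite big_split /=.
have := single_le i0 r0; have := single_le j0 c0.
suff : 2 <= rc p (aa R A i0) i0 \/ 2 <= rc p (ab R A j0) j0.
  have s1 : 0 <= \sum_(i < k) rc p (aa R A i) i by apply: sumr_ge0.
  have s2 : 0 <= \sum_(i < k) rc p (ab R A i) i by apply: sumr_ge0.
  move=> [] ?; lra.
case hin : ((i0, j0) \in A i0).
  right; apply: le_trans (rc_ge j0 h1 h2 h3 h4 _ _ _).
  - rewrite ifT //.
    have : 1 <= k%:R - ab R A j0 j0.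
      rewrite b_eq'; apply: le_trans (single_le i0 _); last by move=> i; apply: ind_ge0.
      rewrite /ind ifT //; apply/negP => hj.
      by move: hij; rewrite (assign_uniq hA hin hj) eqxx.
    lra.
  - by move=> l; apply: ab_ge0.
  - exact: sum_ab.
  - by move=> l; apply: ab_le.
left; apply: le_trans (rc_ge i0 h1 h2 h3 h4 _ _ _).
- rewrite ifT //.
  have : 1 <= k%:R - aa R A i0 i0.
    rewrite b_eq; apply: le_trans (single_le j0 _); last by move=> i; apply: ind_ge0.
    by rewrite /ind hin.
  lra.
- by move=> l; apply: aa_ge0.
- exact: sum_aa.
- by move=> l; apply: aa_le.
Qed.

Definition A0 k (l : 'I_k) : {set V k} := Defs.row l.

Lemma A0_assign k : assignment (@A0 k).
Proof.
split; first by move=> l; rewrite /A0 /Defs.row inE.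
move=> v; exists v.1; split; first by rewrite /A0 /Defs.row inE.
by move=> l; rewrite /A0 /Defs.row inE => /eqP.
Qed.

Lemma phiP_le (R : realType) (p t : R) : phiP p t <= 2 * p - t.
Proof. rewrite /phiP; case: ifP => h; lra. Qed.

Lemma A0_cost (R : realType) k : 1 <= pp R k ->
  cost R (@A0 k) <= 2 * pp R k * k%:R.
Proof.
move=> hp; rewrite cost_eq; last exact: A0_assign.
move: hp; set p := pp R k; clearbody p => hp.
have ha : forall i l, aa R (@A0 k) i l = if l == i then k%:R else 0.
  move=> i l; rewrite /aa /A0 /Defs.row.
  rewrite (eq_bigr (fun _ => @ind R (i == l))); last by move=> j _; rewrite inE.
  rewrite /ind eq_sym; case: ifP => _; first by rewrite sum_ind1.
  by rewrite big1.
have hb : forall i l, ab R (@A0 k) i l = 1.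
  move=> i l; rewrite /ab /A0 /Defs.row.
  rewrite (eq_bigr (fun j => 1 * @ind R (l == j))); last by move=> j _; rewrite inE mul1r eq_sym.
  by rewrite sum_delta.
have hp0 : forall i, rc p (aa R (@A0 k) i) i = 0.
  have z : (0 : R) <= p by lra.
  move=> i; rewrite /rc ha eqxx subrr big1 /phiP ?ifT ?addr0 //.
  move=> l hl; rewrite ha (negbTE hl) ifT //.
have hp1 : forall i, rc p (ab R (@A0 k) i) i <= 2 * p.
  move=> i; rewrite /rc hb.
  rewrite (eq_bigr (fun _ => 1)); last by move=> l _; rewrite hb /phiP ifT.
  have e : \sum_(l < k | l != i) (1 : R) = k%:R - 1.
    by rewrite -sum_ind1 [X in _ = X - _](bigD1 i) //=; ring.
  rewrite e; have := @phiP_le R p (k%:R - 1); lra.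
rewrite (_ : 2 * p * k%:R = \sum_(i < k) (2 * p)); last by rewrite sumr_const card_ord mulr_natr.
apply: ler_sum => i _.
by rewrite hp0 add0r; exact: hp1.
Qed.
Lemma lt_sq (R : realType) (s t : R) : 0 <= s -> 0 <= t -> t < s -> t ^+ 2 < s ^+ 2.
Proof. move=> hs ht H; nra. Qed.

Lemma le_sq (R : realType) (s t : R) : 0 <= s -> 0 <= t -> s <= t -> s ^+ 2 <= t ^+ 2.
Proof. move=> hs ht H; nra. Qed.

Lemma gam_facts (R : realType) (k : nat) : (10 <= k)%N ->
  let p := k%:R - gam R k / 2 in
  [/\ (3/5) * k%:R <= p, p <= k%:R, p < (Num.sqrt 3 - 1) * k%:R + 1
    & 3 * k%:R ^+ 2 - 2 * k%:R <= (k%:R + p) ^+ 2].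
Proof.
move=> hk p.
have hk' : (10:R) <= k%:R by rewrite ler_nat.
set x := 2 * (k%:R : R) - Num.sqrt (3 * (k%:R : R) ^+ 2 - 2 * k%:R).
have hq : gam R k / 2 = (Num.floor x)%:~R by rewrite /gam; field.
have h1 := floor_le x. have h2 := floorD1_gt x.
rewrite intrD /= in h2.
set s := Num.sqrt _ in x h1 h2 hq.
have hxe : x = 2 * k%:R - s by [].
clearbody x.
have hx0 : 0 <= 3 * (k%:R : R) ^+ 2 - 2 * k%:R by nra.
have hs0 : 0 <= s := sqrtr_ge0 _.
have hs2 : s ^+ 2 = 3 * (k%:R : R) ^+ 2 - 2 * k%:R := sqr_sqrtr hx0.
clearbody s.
have h30 : (0:R) <= 3 by [].
have hy0 : 0 <= Num.sqrt (3:R) := sqrtr_ge0 _.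
have hy2 : Num.sqrt (3:R) ^+ 2 = 3 := sqr_sqrtr h30.
have hsy : s <= Num.sqrt 3 * k%:R.
  case: (lerP s (Num.sqrt 3 * k%:R)) => // H; exfalso.
  have : (Num.sqrt 3 * k%:R) ^+ 2 < s ^+ 2.
    by apply: lt_sq => //; rewrite mulr_ge0 // ler0n.
  rewrite exprMn hy2 hs2; nra.
have hs16 : (8/5) * k%:R <= s.
  case: (lerP (8/5 * k%:R) s) => // H; exfalso.
  have : s ^+ 2 < (8/5 * k%:R) ^+ 2.
    by apply: lt_sq => //; lra.
  rewrite hs2; nra.
rewrite /p hq; set fl := (Num.floor x)%:~R in h1 h2 *; clearbody fl.
rewrite hxe (_ : 1%:~R = 1 :> R) // in h1 h2.
have hfl : s ^+ 2 <= (k%:R + (k%:R - fl)) ^+ 2.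
  apply: le_sq => //; lra.
split; nra.
Qed.

Theorem theorem9 (R : realType) :
  exists (C : R) (K : nat), forall k : nat, (0 < k)%N -> (K <= k)%N ->
    forall mS mA : R,
      is_min_cost (@symmetric_assignment k) mS ->
      is_min_cost (@assignment k) mA ->
      (8 * Num.sqrt 3 - 12) / (2 * Num.sqrt 3 - 2) - C / k%:R <= mS / mA.
Proof.
exists 9, 10%N => k hk0 hk mS mA [[B [hB <-]] _] [[A1 [hA1 <-]] hmin].
have [g1 g2 g3 g4] := @gam_facts R k hk.
have hk' : (10:R) <= k%:R by rewrite ler_nat.
have ep : k%:R - gam R k / 2 = pp R k by [].
rewrite ep in g1 g2 g3 g4.
have hkp : k%:R <= 2 * pp R k by lra.
have hsym := @sym_cost R k B hB.
have hrc := @sym_rc R k B (pp R k) hB hkp g2 ltac:(nra).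
have hpos := @cost_pos R k A1 (leq_trans (isT : (2 <= 10)%N) hk) hA1 hkp ltac:(lra) ltac:(lra) g2.
have hup := le_trans (hmin _ (A0_assign k)) (@A0_cost R k ltac:(lra)).
move: hsym hrc hpos hup g1 g2 g3 g4.
set p := pp R k; set cS := cost R B; set cA := cost R A1; clearbody p cS cA.
move: (\sum_(i < k) rc p (aa R B i) i) => t -> htr hpos hup g1 g2 g3 g4.
set y := Num.sqrt (3 : R).
have hy0 : 0 <= y := sqrtr_ge0 _.
have hy2 : y ^+ 2 = 3 by apply: sqr_sqrtr.
have hy1 : 1 < y by nra.
have -> : (8 * y - 12) / (2 * y - 2) = 3 - y.
  have hne : 2 * y - 2 != 0 by rewrite subr_eq0; apply/eqP => h; lra.
  rewrite (_ : 8 * y - 12 = (3 - y) * (2 * y - 2)) ?mulfK //.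
  rewrite (_ : (3 - y) * (2 * y - 2) = 8 * y - 6 - 2 * y ^+ 2); first by rewrite hy2; ring.
  ring.
have kne : k%:R != (0 : R) by rewrite pnatr_eq0 -lt0n.
have hcA : 0 < cA by lra.
rewrite ler_pdivlMr //.
have hz : 9 / k%:R * k%:R = 9 :> R by rewrite divfK.
move: hz; set z := 9 / k%:R; clearbody z => hz.
have hX : 0 <= 2 * (2 * p * k%:R - p ^+ 2 - 4 * k%:R).
  have : 0 <= (p - (3/5) * k%:R) * (2 * k%:R - p) by apply: mulr_ge0; lra.
  nra.
case: (lerP (3 - y - z) 0) => c.
  have : (3 - y - z) * cA <= 0 by apply: mulr_le0_ge0 => //; lra.
  lra.
have h1 : (3 - y - z) * cA <= (3 - y - z) * (2 * p * k%:R).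
  by apply: ler_wpM2l; lra.
have h2 : (3 - y - z) * (2 * p * k%:R) = (3 - y) * (2 * p * k%:R) - 2 * p * (z * k%:R).
  ring.
rewrite hz in h2.
have g3y : p < (y - 1) * k%:R + 1 by exact: g3.
have h3 : 0 <= p * ((y - 1) * k%:R + 1 - p) by apply: mulr_ge0; lra.
nra.
Qed.
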